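(* There is no commutative unitary ring $R$ with exactly three ideals such that $(Id(R),\cap,+,\otimes,\rightarrow,\{0\},R)$ is a BL-algebra which is not an MV-algebra.
   Context: For a commutative unitary ring $R$, $Id(R)$ is the set of its ideals, ordered by inclusion, with $I\cap J$, $I+J=\{i+j: i\in I, j\in J\}$, $I\otimes J=\{\sum_{k=1}^n i_kj_k: i_k\in I, j_k\in J\}$, and $I\rightarrow J=(J:I)=\{x\in R: xI\subseteq J\}$; this is a residuated lattice with bottom $\{0\}$ and top $R$. A (commutative) residuated lattice $(L,\wedge,\vee,\odot,\rightarrow,0,1)$ is a bounded lattice with a commutative ordered monoid $(L,\odot,1)$ such that $z\le x\rightarrow y$ iff $x\odot z\le y$. A BL-algebra is a residuated lattice satisfying $(x\rightarrow y)\vee(y\rightarrow x)=1$ and $x\odot(x\rightarrow y)=x\wedge y$. A BL-algebra is an MV-algebra (i.e. corresponds to an MV-algebra) when $x^{\ast\ast}=x$ for all $x$, where $x^\ast=x\rightarrow 0$. *)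

(* Defs.v *)
From mathcomp Require Import all_boot all_order all_algebra.
Set Implicit Arguments. Unset Strict Implicit. Unset Printing Implicit Defensive.
Import GRing.Theory.
Local Open Scope ring_scope.

Section Algebras.
Variable L : Type.
Variables (meet join mul impl : L -> L -> L) (bot top : L).

Definition rl_le (x y : L) : Prop := meet x y = x.

Definition is_residuated_lattice : Prop :=
  (forall x y z, meet x (meet y z) = meet (meet x y) z) /\
  (forall x y, meet x y = meet y x) /\
  (forall x y z, join x (join y z) = join (join x y) z) /\
  (forall x y, join x y = join y x) /\
  (forall x y, meet x (join x y) = x) /\
  (forall x y, join x (meet x y) = x) /\
  (forall x, join bot x = x) /\
  (forall x, meet top x = x) /\
  (forall x y z, mul x (mul y z) = mul (mul x y) z) /\
  (forall x y, mul x y = mul y x) /\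
  (forall x, mul top x = x) /\
  (forall x y z, rl_le x y -> rl_le (mul x z) (mul y z)) /\
  (forall x y z, rl_le z (impl x y) <-> rl_le (mul x z) y).

Definition is_BL_algebra : Prop :=
  is_residuated_lattice /\
  (forall x y, join (impl x y) (impl y x) = top) /\
  (forall x y, mul x (impl x y) = meet x y).

Definition is_MV_algebra : Prop :=
  is_BL_algebra /\ (forall x, impl (impl x bot) bot = x).
End Algebras.

Section Ideals.
Variable R : comPzRingType.

Definition is_ideal (I : R -> Prop) : Prop :=
  I 0 /\ (forall x y, I x -> I y -> I (x + y)) /\ (forall r x, I x -> I (r * x)).

Record ideal := Ideal { ideal_set :> R -> Prop; ideal_isideal : is_ideal ideal_set }.

Definition cap_set (I J : R -> Prop) : R -> Prop := fun x => I x /\ J x.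
Definition sum_set (I J : R -> Prop) : R -> Prop :=
  fun x => exists i j, I i /\ J j /\ x = i + j.
Definition prod_set (I J : R -> Prop) : R -> Prop :=
  fun x => exists s : seq (R * R),
    (forall p, p \in s -> I p.1 /\ J p.2) /\ x = \sum_(p <- s) p.1 * p.2.
Definition res_set (I J : R -> Prop) : R -> Prop :=
  fun x => forall i, I i -> J (x * i).

Lemma cap_is_ideal (I J : ideal) : is_ideal (cap_set I J).
Proof.
case: I J => I [I0 [ID IM]] [J [J0 [JD JM]]]; rewrite /cap_set /=.
split; first by [].
split; first by move=> x y [? ?] [? ?]; split; auto.
by move=> r x [? ?]; split; auto.
Qed.

Lemma sum_is_ideal (I J : ideal) : is_ideal (sum_set I J).
Proof.
case: I J => I [I0 [ID IM]] [J [J0 [JD JM]]]; rewrite /sum_set /=.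
split; first by exists 0, 0; rewrite addr0.
split.
  move=> x y [i [j [Hi [Hj ->]]]] [i' [j' [Hi' [Hj' ->]]]].
  exists (i + i'), (j + j'); do 2?split; auto.
  by rewrite addrACA.
move=> r x [i [j [Hi [Hj ->]]]]; exists (r * i), (r * j); do 2?split; auto.
by rewrite mulrDr.
Qed.

Lemma prod_is_ideal (I J : ideal) : is_ideal (prod_set I J).
Proof.
case: I J => I [I0 [ID IM]] [J [J0 [JD JM]]]; rewrite /prod_set /=.
split; first by exists [::]; rewrite big_nil.
split.
  move=> x y [s [Hs ->]] [t [Ht ->]]; exists (s ++ t); split; last by rewrite big_cat.
  by move=> p; rewrite mem_cat => /orP [/Hs | /Ht].
move=> r x [s [Hs ->]]; exists [seq (r * p.1, p.2) | p <- s]; split.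
  move=> p /mapP [q /Hs [Hq1 Hq2] ->] /=; split; auto.
rewrite big_map mulr_sumr; apply: eq_bigr => p _ /=; by rewrite mulrA.
Qed.

Lemma res_is_ideal (I J : ideal) : is_ideal (res_set I J).
Proof.
case: I J => I [I0 [ID IM]] [J [J0 [JD JM]]]; rewrite /res_set /=.
split; first by move=> i _; rewrite mul0r.
split; first by move=> x y Hx Hy i Hi; rewrite mulrDl; auto.
by move=> r x Hx i Hi; rewrite -mulrA; auto.
Qed.

Lemma zero_is_ideal : is_ideal (fun x : R => x = 0).
Proof.
split; first by [].
split; first by move=> x y -> ->; rewrite addr0.
by move=> r x ->; rewrite mulr0.
Qed.

Lemma full_is_ideal : is_ideal (fun _ : R => True).
Proof. by []. Qed.

Definition id_meet (I J : ideal) : ideal := Ideal (cap_is_ideal I J).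
Definition id_join (I J : ideal) : ideal := Ideal (sum_is_ideal I J).
Definition id_mul (I J : ideal) : ideal := Ideal (prod_is_ideal I J).
Definition id_impl (I J : ideal) : ideal := Ideal (res_is_ideal I J).
Definition id_bot : ideal := Ideal zero_is_ideal.
Definition id_top : ideal := Ideal full_is_ideal.

Definition same_ideal (I J : ideal) : Prop := forall x, I x <-> J x.

Definition has_exactly_three_ideals : Prop :=
  exists I1 I2 I3 : ideal,
    ~ same_ideal I1 I2 /\ ~ same_ideal I1 I3 /\ ~ same_ideal I2 I3 /\
    forall J : ideal, same_ideal J I1 \/ same_ideal J I2 \/ same_ideal J I3.

Definition IdR_is_BL : Prop :=
  is_BL_algebra id_meet id_join id_mul id_impl id_bot id_top.
Definition IdR_is_MV : Prop :=
  is_MV_algebra id_meet id_join id_mul id_impl id_bot id_top.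
End Ideals.

(* Main.v *)
Require Import Defs.
From mathcomp Require Import all_boot all_order all_algebra.
From Stdlib Require Import Classical FunctionalExtensionality PropExtensionality ProofIrrelevance.
Set Implicit Arguments. Unset Strict Implicit.
Import GRing.Theory.
Local Open Scope ring_scope.

Section Aux.
Variable R : comPzRingType.

Lemma ideal_ext (I J : ideal R) : same_ideal I J -> I = J.
Proof.
case: I J => I HI [J HJ] /= H.
have E : I = J by apply: functional_extensionality => x; apply: propositional_extensionality; exact: H.
subst J; f_equal; apply: proof_irrelevance.
Qed.

Lemma same_sym (I J : ideal R) : same_ideal I J -> same_ideal J I.
Proof. by move=> H x; split => /H. Qed.

Lemma same_trans (I J K : ideal R) : same_ideal I J -> same_ideal J K -> same_ideal I K.
Proof. by move=> H1 H2 x; split => [/H1/H2|/H2/H1]. Qed.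

Lemma pideal_is_ideal (x : R) : is_ideal (fun y => exists t, y = t * x).
Proof.
split; first by exists 0; rewrite mul0r.
split; first by move=> a b [s ->] [t ->]; exists (s + t); rewrite mulrDl.
by move=> r a [t ->]; exists (r * t); rewrite mulrA.
Qed.

Definition pideal x : ideal R := Ideal (pideal_is_ideal x).

Lemma imul (I : ideal R) r x : I x -> I (r * x).
Proof. case: I => I [? [? H]] /=; exact: H. Qed.
Lemma iadd (I : ideal R) x y : I x -> I y -> I (x + y).
Proof. case: I => I [? [H ?]] /=; exact: H. Qed.
Lemma i0 (I : ideal R) : I 0.
Proof. by case: I => I [H ?]. Qed.

Definition NP (J : ideal R) := (exists j, J j /\ j <> 0) /\ ~ J 1.

Hypothesis H3 : has_exactly_three_ideals R.

Lemma pigeon (A B C D : ideal R) :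
  ~ same_ideal A B -> ~ same_ideal A C -> ~ same_ideal A D ->
  ~ same_ideal B C -> ~ same_ideal B D -> ~ same_ideal C D -> False.
Proof.
case: H3 => I1 [I2 [I3 [n12 [n13 [n23 Hall]]]]] nAB nAC nAD nBC nBD nCD.
case: (Hall A) => [hA|[hA|hA]]; case: (Hall B) => [hB|[hB|hB]];
case: (Hall C) => [hC|[hC|hC]]; case: (Hall D) => [hD|[hD|hD]];
solve [ match goal with
  | H1 : same_ideal ?a ?k, H2 : same_ideal ?b ?k, N : ~ same_ideal ?a ?b |- _ =>
      apply N; eapply same_trans; [exact H1|apply same_sym; exact H2] end ].
Qed.

Lemma one_neq0 : (1 : R) <> 0.
Proof.
move=> E; case: H3 => I1 [I2 [_ [n12 _]]]; apply: n12 => x.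
have -> : x = 0 by rewrite -[x]mulr1 E mulr0.
by split => _; apply: i0.
Qed.

Lemma same_np (J K : ideal R) : NP J -> NP K -> same_ideal J K.
Proof.
move=> [[j [Jj j0]] J1] [[k [Kk k0]] K1].
apply: NNPP => nJK.
apply: (@pigeon (id_bot R) (id_top R) J K) => //.
- by move=> H; apply: one_neq0; apply/(H 1).
- by move=> H; apply: j0; apply/(H j).
- by move=> H; apply: k0; apply/(H k).
- by move=> H; apply: J1; apply/(H 1).
- by move=> H; apply: K1; apply/(H 1).
Qed.

Lemma sq0 (X : ideal R) x : NP X -> X x -> x <> 0 -> x * x = 0.
Proof.
move=> hX Xx x0.
have NPx : NP (pideal x).
  split; first by exists x; split => //; exists 1; rewrite mul1r.
  by case=> t /= E; apply: hX.2; rewrite E; apply: imul.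
apply: NNPP => xx0.
have NPxx : NP (pideal (x * x)).
  split; first by exists (x * x); split => //; exists 1; rewrite mul1r.
  by case=> t /= E; apply: hX.2; rewrite E mulrA; apply: imul.
have [t Et] : pideal (x * x) x by apply/(same_np NPx NPxx x); exists 1; rewrite mul1r.
set u := 1 - t * x.
have xu : x * u = 0 by rewrite /u mulrBr mulr1 mulrA (mulrC x t) -mulrA -Et subrr.
case: (classic (pideal u 1)) => [[s Es]|nu1].
  by apply: x0; rewrite -[x]mulr1 Es mulrA (mulrC x s) -mulrA xu mulr0.
have NPu : NP (pideal u).
  split => //; exists u; split; first by exists 1; rewrite mul1r.
  move=> u0; apply: hX.2; have -> : (1 : R) = t * x by apply/eqP; rewrite -subr_eq0 -/u u0.
  by apply: imul.
have Xu : X u by apply/(same_np NPu hX u); exists 1; rewrite mul1r.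
apply: hX.2; have -> : (1 : R) = u + t * x by rewrite /u subrK.
by apply: iadd => //; apply: imul.
Qed.

End Aux.

Theorem proposition3p1 :
  ~ exists R : comPzRingType,
      has_exactly_three_ideals R /\ IdR_is_BL R /\ ~ IdR_is_MV R.
Proof.
move=> [R [H3 [HBL HnMV]]]; apply: HnMV; split => // X.
apply: ideal_ext => r /=; rewrite /res_set /=; split; last first.
  by move=> Xr i Hi; rewrite mulrC; apply: Hi.
move=> H.
case: (classic (forall x, X x -> x = 0)) => [Z|nZ].
  have -> : r = 0 by rewrite -[r]mulr1; apply: H => j /Z ->; rewrite mul1r.
  exact: i0.
case: (classic (X 1)) => [X1|nX1].
  by rewrite -[r]mulr1; apply: imul.
have [x [Xx x0]] : exists x, X x /\ x <> 0.
  apply: NNPP => nE; apply: nZ => y Xy; apply: NNPP => y0; apply: nE; by exists y.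
have hX : NP X by split => //; exists x.
have NPx : NP (pideal x).
  split; first by exists x; split => //; exists 1; rewrite mul1r.
  by case=> t /= E; apply: nX1; rewrite E; apply: imul.
have Sx := same_np H3 hX NPx.
have xx := sq0 H3 hX Xx x0.
have XX : forall y z, X y -> X z -> y * z = 0.
  move=> y z /Sx [a ->] /Sx [b ->].
  by rewrite mulrA -(mulrA a) (mulrC x b) mulrA -mulrA xx mulr0.
pose A := id_impl X (id_bot R).
have NPA : NP A.
  split.
    by exists x; split => // j Xj /=; apply: XX.
  by move=> /= A1; apply: x0; rewrite -[x]mul1r; apply: A1.
apply/(same_np H3 NPA hX r) => /= j Xj.
by apply: H => k Xk; apply: XX.
Qed.
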